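(* Let $\mathcal{P}$ be a process LTS and $\mathcal{E}$ an environment LTS. For all image-finite environments $e$ and all image-finite processes $p,q$: (1) $p\le^{ji}_e q \iff p\le_e q \iff \mathcal{L}(p)\cap\mathcal{L}(e)\subseteq\mathcal{L}(q)\cap\mathcal{L}(e)$; (2) $p\simeq^{ji}_e q \iff p\simeq_e q \iff \mathcal{L}(p)\cap\mathcal{L}(e)=\mathcal{L}(q)\cap\mathcal{L}(e)$. The implications from left to right (from $p\le_e q$, resp. $p\simeq_e q$, to the formula conditions) hold also for $p,q,e$ that are not image-finite.
   Context: A labeled transition system (LTS) is a triple $\langle \mathrm{St},A,\to\rangle$ with states, actions, and transitions $s\xrightarrow{a}t$. A process LTS $\mathcal{P}=\langle \mathrm{Pr},A,\to\rangle$ has states called processes; an environment LTS $\mathcal{E}=\langle\mathrm{Env},A,\Rightarrow\rangle$ has states called environments, transitions $e\xRightarrow{a}e'$. A state is image-finite if every state reachable from it has, for each action $a$, only finitely many $a$-successors. A simulation is a nonempty relation $S$ on states such that $s\,S\,t$ and $s\xrightarrow{a}s'$ imply some $t\xrightarrow{a}t'$ with $s'\,S\,t'$; $s\le t$ iff some simulation relates $s$ to $t$. An $\mathcal{E}$-parameterized simulation on $\mathcal{P}$ is a family $(S_f)_{f\in\mathrm{Env}}$ of nonempty relations on $\mathrm{Pr}$ such that whenever $p\,S_e\,q$, $e\xRightarrow{a}e'$ and $p\xrightarrow{a}p'$, there is $q'$ with $q\xrightarrow{a}q'$ and $p'\,S_{e'}\,q'$. $p\le_e q$ iff some such family has $p\,S_e\,q$;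 $p\simeq_e q$ iff $p\le_e q$ and $q\le_e p$. The join LTS $\mathcal{P}\mathbin{\&}\mathcal{E}$ has states $p\mathbin{\&}e$ and transitions $p\mathbin{\&}e\xrightarrow{a}p'\mathbin{\&}e'$ iff $p\xrightarrow{a}p'$ and $e\xRightarrow{a}e'$. $p\le^{ji}_e q$ iff $p\mathbin{\&}e\le q\mathbin{\&}e$; $p\simeq^{ji}_e q$ iff $p\le^{ji}_e q$ and $q\le^{ji}_e p$. Positive formulas $\mathcal{L}$ over $A$: $\phi::=\top\mid\phi\wedge\phi\mid\langle a\rangle\phi$. Satisfaction: $s\models\top$ always; $s\models\phi_1\wedge\phi_2$ iff both; $s\models\langle a\rangle\phi$ iff some $s\xrightarrow{a}s'$ with $s'\models\phi$ (in the LTS containing $s$). $\mathcal{L}(s)=\{\phi\in\mathcal{L}: s\models\phi\}$. *)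

(* Defs.v *)
From Stdlib Require Import List.

Set Implicit Arguments.

Definition lts (S A : Type) := S -> A -> S -> Prop.

Section LTSDefs.
Variables (S A : Type) (step : lts S A).

Inductive reachable : S -> S -> Prop :=
| reach_refl : forall s, reachable s s
| reach_step : forall s a s' t, step s a s' -> reachable s' t -> reachable s t.

Definition image_finite (s : S) : Prop :=
  forall t, reachable s t ->
    forall a : A, exists l : list S, forall t', step t a t' -> In t' l.

Definition simulation (R : S -> S -> Prop) : Prop :=
  (exists s t, R s t) /\
  forall s t a s', R s t -> step s a s' -> exists t', step t a t' /\ R s' t'.

Definition sim_le (s t : S) : Prop :=
  exists R, simulation R /\ R s t.

Inductive form : Type :=
| FTop : form
| FAnd : form -> form -> form
| FDia : A -> form -> form.

Fixpoint sat (s : S) (phi : form) : Prop :=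
  match phi with
  | FTop => True
  | FAnd phi1 phi2 => sat s phi1 /\ sat s phi2
  | FDia a phi' => exists s', step s a s' /\ sat s' phi'
  end.

End LTSDefs.

Arguments FTop {A}.

Section ParamSim.
Variables (Pr Env A : Type) (pstep : lts Pr A) (estep : lts Env A).

Definition param_simulation (Sf : Env -> Pr -> Pr -> Prop) : Prop :=
  (forall f : Env, exists p q, Sf f p q) /\
  forall e e' p q a p', Sf e p q -> estep e a e' -> pstep p a p' ->
    exists q', pstep q a q' /\ Sf e' p' q'.

Definition param_le (e : Env) (p q : Pr) : Prop :=
  exists Sf, param_simulation Sf /\ Sf e p q.

Definition param_eq (e : Env) (p q : Pr) : Prop :=
  param_le e p q /\ param_le e q p.

Definition join_step : lts (Pr * Env) A :=
  fun pe a pe' => pstep (fst pe) a (fst pe') /\ estep (snd pe) a (snd pe').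

Definition ji_le (e : Env) (p q : Pr) : Prop :=
  sim_le join_step (p, e) (q, e).

Definition ji_eq (e : Env) (p q : Pr) : Prop :=
  ji_le e p q /\ ji_le e q p.

(* L(p) ∩ L(e) ⊆ L(q) ∩ L(e) *)
Definition form_incl (e : Env) (p q : Pr) : Prop :=
  forall phi : form A,
    (sat pstep p phi /\ sat estep e phi) -> (sat pstep q phi /\ sat estep e phi).

Definition form_eqv (e : Env) (p q : Pr) : Prop :=
  forall phi : form A,
    (sat pstep p phi /\ sat estep e phi) <-> (sat pstep q phi /\ sat estep e phi).

End ParamSim.

(* Main.v *)
Require Import Defs.
From Stdlib Require Import List Classical.

Section Proofs.
Variables (Pr Env A : Type) (pstep : lts Pr A) (estep : lts Env A).

Lemma sat_join : forall phi p e,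
  sat (join_step pstep estep) (p, e) phi <-> sat pstep p phi /\ sat estep e phi.
Proof.
  induction phi as [|phi1 IH1 phi2 IH2|a phi IH]; intros p e; simpl.
  - tauto.
  - rewrite IH1, IH2. tauto.
  - split.
    + intros [[p' e'] [[H1 H2] Hs]]. apply IH in Hs. simpl in *.
      split; [exists p'|exists e']; tauto.
    + intros [[p' [H1 H1']] [e' [H2 H2']]]. exists (p', e').
      split; [split; assumption|]. apply IH; auto.
Qed.

Lemma sim_sat (S : Type) (step : lts S A) R :
  simulation step R -> forall phi s t, R s t -> sat step s phi -> sat step t phi.
Proof.
  intros [_ HR]. induction phi as [|phi1 IH1 phi2 IH2|a phi IH]; intros s t Hst; simpl.
  - auto.
  - intros [H1 H2]; split; eauto.
  - intros [s' [Hs Hs']]. destruct (HR _ _ _ _ Hst Hs) as [t' [Ht Ht']].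
    exists t'; eauto.
Qed.

Lemma L3 : forall e p q, param_le pstep estep e p q -> form_incl pstep estep e p q.
Proof.
  intros e p q [Sf [[_ HS] H]] phi. revert e p q H.
  induction phi as [|phi1 IH1 phi2 IH2|a phi IH]; intros e p q H; simpl.
  - tauto.
  - intros [[H1 H2] [H3 H4]].
    destruct (IH1 e p q H) as [? _]; [tauto|].
    destruct (IH2 e p q H) as [? _]; [tauto|]. tauto.
  - intros [[p' [Hp Hp']] [e' [He He']]].
    destruct (HS _ _ _ _ _ _ H He Hp) as [q' [Hq Hq']].
    split; [|exists e'; auto].
    exists q'. split; auto. apply (IH e' p' q' Hq'); auto.
Qed.

Lemma L4 : forall e p q, param_le pstep estep e p q -> ji_le pstep estep e p q.
Proof.
  intros e p q [Sf [[_ HS] H]].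
  exists (fun x y => snd x = snd y /\ Sf (snd x) (fst x) (fst y)).
  split; [|simpl; auto].
  split; [exists (p, e), (q, e); simpl; auto|].
  intros [p1 f] [q1 g] a [p' f'] [Heq H1] [Hp Hf]; simpl in *. subst g.
  destruct (HS _ _ _ _ _ _ H1 Hf Hp) as [q' [Hq Hq']].
  exists (q', f'). split; [split; auto|simpl; auto].
Qed.

Lemma L5 : forall e p q, ji_le pstep estep e p q -> form_incl pstep estep e p q.
Proof.
  intros e p q [R [HR H]] phi Hp.
  pose proof (@sim_sat _ _ _ HR phi _ _ H) as K.
  rewrite !sat_join in K. tauto.
Qed.

Lemma HM_list : forall (p' : Pr) (f' : Env) q a (l : list Pr),
  (forall q', pstep q a q' -> ~ (forall phi, sat pstep p' phi /\ sat estep f' phi -> sat pstep q' phi)) ->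
  exists psi, sat pstep p' psi /\ sat estep f' psi /\
    forall q', In q' l -> pstep q a q' -> ~ sat pstep q' psi.
Proof.
  intros p' f' q a l Hn. induction l as [|z l IH].
  - exists FTop. simpl. tauto.
  - destruct IH as [psi [H1 [H2 H3]]].
    destruct (classic (pstep q a z)) as [Hz|Hz].
    + specialize (Hn z Hz). apply not_all_ex_not in Hn. destruct Hn as [phi Hphi].
      apply imply_to_and in Hphi. destruct Hphi as [Hphi1 Hphi2].
      exists (FAnd phi psi). simpl. split; [tauto|split; [tauto|]].
      intros q' [<-|Hin] Hs [Ha Hb]; [tauto|]. exact (H3 q' Hin Hs Hb).
    + exists psi. split; [tauto|split; [tauto|]].
      intros q' [<-|Hin] Hs; [tauto|]. auto.
Qed.

Lemma imfin_succ : forall q a q', image_finite pstep q -> pstep q a q' -> image_finite pstep q'.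
Proof.
  intros q a q' H Hs t Ht. apply H. eapply reach_step; eauto.
Qed.

Lemma L6 : forall e p q, image_finite pstep q -> form_incl pstep estep e p q ->
  param_le pstep estep e p q.
Proof.
  intros e p q Hq Hi.
  exists (fun f p q => p = q \/ (image_finite pstep q /\ form_incl pstep estep f p q)).
  split; [|right; auto].
  split; [intros f; exists p, p; auto|].
  intros f f' p1 q1 a p' [<-|[Hfin Hinc]] Hf Hp.
  - exists p'. auto.
  - destruct (classic (exists q', pstep q1 a q' /\
       (forall phi, sat pstep p' phi /\ sat estep f' phi -> sat pstep q' phi))) as
      [[q' [Hs Hq']]|Hno].
    + exists q'. split; auto. right. split; [eapply imfin_succ; eauto|].
      intros phi Hphi. split; [apply Hq'; auto|tauto].
    + exfalso.
      destruct (Hfin q1 (reach_refl _ _) a) as [l Hl].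
      destruct (HM_list p' f' q1 a l) as [psi [H1 [H2 H3]]].
      { intros q' Hs Hc. apply Hno. eauto. }
      destruct (Hinc (FDia a psi)) as [[q' [Hs Hs']] _].
      { simpl. split; eauto. }
      exact (H3 q' (Hl q' Hs) Hs Hs').
Qed.

End Proofs.

Theorem theorem4p2 :
  forall (Pr Env A : Type) (pstep : lts Pr A) (estep : lts Env A),
    (* (1) for image-finite e, p, q *)
    (forall (e : Env) (p q : Pr),
        image_finite estep e -> image_finite pstep p -> image_finite pstep q ->
        (ji_le pstep estep e p q <-> param_le pstep estep e p q) /\
        (param_le pstep estep e p q <-> form_incl pstep estep e p q)) /\
    (* (2) for image-finite e, p, q *)
    (forall (e : Env) (p q : Pr),
        image_finite estep e -> image_finite pstep p -> image_finite pstep q ->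
        (ji_eq pstep estep e p q <-> param_eq pstep estep e p q) /\
        (param_eq pstep estep e p q <-> form_eqv pstep estep e p q)) /\
    (* left-to-right implications without image-finiteness *)
    (forall (e : Env) (p q : Pr),
        param_le pstep estep e p q -> form_incl pstep estep e p q) /\
    (forall (e : Env) (p q : Pr),
        param_eq pstep estep e p q -> form_eqv pstep estep e p q).
Proof.
  intros Pr Env A pstep estep.
  assert (Eqv : forall e p q, form_eqv pstep estep e p q <->
     form_incl pstep estep e p q /\ form_incl pstep estep e q p).
  { intros e p q; unfold form_eqv, form_incl; split.
    - intros H; split; intros phi; apply H.
    - intros [H1 H2] phi; split; auto. }
  split; [|split; [|split]].
  - intros e p q He Hp Hq. split; split.
    + intros H. apply L6; auto. apply L5; auto.
    + apply L4.
    + apply L3.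
    + apply L6; auto.
  - intros e p q He Hp Hq. unfold ji_eq, param_eq. rewrite Eqv. split; split.
    + intros [H1 H2]. split; apply L6; auto; apply L5; auto.
    + intros [H1 H2]; split; apply L4; auto.
    + intros [H1 H2]; split; apply L3; auto.
    + intros [H1 H2]; split; apply L6; auto.
  - apply L3.
  - intros e p q [H1 H2]. apply Eqv. split; apply L3; auto.
Qed.
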